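(* Let $p,q$ be integers with $p\ge2$ and $0<q<p$. Let $g(x)=(1-p^2x)^{-q/p}$, $h(x)=(1-p^2x)^{-(p-q)/p}$, and $f(x)=\dfrac{-x}{1-p^2x}$. Then the dual Riordan array satisfies $R^*(g,f)=R(h,f)$.
   Context: For power series $g$ and $f$ with $f(0)=0$, the Riordan array $R(g,f)$ is the infinite matrix with entries $R(g,f)_{n,k}=[x^n]\bigl(g(x)f(x)^k\bigr)$ for $n,k\ge0$. If moreover $f'(0)\ne0$, the recursive matrix $D(g,f)$ is the doubly infinite matrix with entries $D(g,f)_{n,k}=[x^n]\bigl(g(x)f(x)^k\bigr)$ for all integers $n,k$, where for $k<0$, $f(x)^k$ is the multiplicative inverse of $f(x)^{-k}$ in the ring of formal Laurent series. The dual Riordan array $R^*(g,f)$ is the infinite matrix with entries $R^*(g,f)_{i,j}=D(g,f)_{-j,-i}$ for $i,j\ge0$ (the anti-transpose of the upper left quadrant of $D(g,f)$). *)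

(* Defs.v *)
From HB Require Import structures.
From mathcomp Require Import all_boot all_order all_algebra.
Set Implicit Arguments. Unset Strict Implicit. Unset Printing Implicit Defensive.
Import Order.TTheory GRing.Theory Num.Theory.
Local Open Scope ring_scope.

Definition ps := nat -> rat.

Definition psmul (a b : ps) : ps :=
  fun n => \sum_(i < n.+1) a i * b (n - i)%N.

Definition psone : ps := fun n => (n == 0%N)%:R.

Definition psexp (a : ps) (k : nat) : ps := iter k (psmul a) psone.

Fixpoint psinv_seq (a : ps) (n : nat) : seq rat :=
  match n with
  | 0%N => [:: (a 0%N)^-1]
  | n'.+1 => let s := psinv_seq a n' in
      rcons s (- (a 0%N)^-1 * \sum_(1 <= i < n'.+2) a i * nth 0 s (n'.+1 - i)%N)
  end.
Definition psinv (a : ps) : ps := fun n => nth 0 (psinv_seq a n) n.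

(* (1 + c x)^alpha for a rational exponent alpha, via the generalized
   binomial series: [x^n] = (alpha choose n) c^n *)
Definition psbinom (alpha c : rat) : ps :=
  fun n => (\prod_(i < n) (alpha - i%:R)) / (n`!)%:R * c ^+ n.

Definition riordan (g f : ps) (n k : nat) : rat := psmul g (psexp f k) n.

(* Recursive matrix D(g,f)_{n,k} = [x^n] g f^k for all integers n,k.
   For k = -m < 0, f = x * u with u := f/x (u 0 = f'(0) <> 0); in the ring
   of formal Laurent series the inverse of f^m = x^m u^m is
   x^(-m) * (u^-1)^m, so [x^n] g f^(-m) = [x^(n+m)] g (u^-1)^m
   (0 if n + m < 0). *)
Definition recmat (g f : ps) (n k : int) : rat :=
  match k with
  | Posz k' => match n with Posz n' => riordan g f n' k' | Negz _ => 0 end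
  | Negz m' =>
      let m := m'.+1 in
      let u : ps := fun i => f i.+1 in
      match (n + m%:Z)%R with
      | Posz e => psmul g (psexp (psinv u) m) e
      | Negz _ => 0
      end
  end.

Definition dual_riordan (g f : ps) (i j : nat) : rat :=
  recmat g f (- (j%:Z)) (- (i%:Z)).

Definition gser (p q : nat) : ps :=
  psbinom (- (q%:R / p%:R)) (- (p ^ 2)%:R).
Definition hser (p q : nat) : ps :=
  psbinom (- ((p - q)%:R / p%:R)) (- (p ^ 2)%:R).
Definition fser (p : nat) : ps :=
  psmul (fun n => - (n == 1%N)%:R) (psbinom (-1) (- (p ^ 2)%:R)).

(* Main.v *)
Require Import Defs.
From HB Require Import structures.
From mathcomp Require Import all_boot all_order all_algebra.
From mathcomp Require Import ring zify.
From Stdlib Require Import FunctionalExtensionality.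
Set Implicit Arguments. Unset Strict Implicit. Unset Printing Implicit Defensive.
Import Order.TTheory GRing.Theory Num.Theory.
Local Open Scope ring_scope.

Definition Cb (a : rat) n := (\prod_(i < n) (a - i%:R)) / (n`!)%:R.

Lemma Cb0 a : Cb a 0 = 1.
Proof. by rewrite /Cb big_ord0 fact0 divr1. Qed.

Lemma Crec a n : Cb a n.+1 * n.+1%:R = (a - n%:R) * Cb a n.
Proof.
rewrite /Cb big_ord_recr /= factS natrM.
have h1 : (n.+1)%:R != 0 :> rat by rewrite pnatr_eq0.
have h2 : (n`!)%:R != 0 :> rat by rewrite pnatr_eq0 -lt0n fact_gt0.
field; rewrite ?h1 ?h2 //=.
by rewrite -(natrD _ 1 n) add1n.
Qed.

Lemma Cvand a b n : \sum_(k < n.+1) Cb a k * Cb b (n - k) = Cb (a+b) n.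
Proof.
elim: n => [|n IH]; first by rewrite big_ord1 !Cb0 mulr1.
have nz : (n.+1)%:R != 0 :> rat by rewrite pnatr_eq0.
apply: (mulIf nz); rewrite Crec -IH.
rewrite mulr_suml.
rewrite (eq_bigr (fun k : 'I_n.+2 => Cb a k * Cb b (n.+1 - k) * k%:R
   + Cb a k * Cb b (n.+1 - k) * (n.+1 - k)%N%:R)); last first.
  move=> k _; rewrite -mulrDr -natrD subnKC //; exact: (ltn_ord k).
rewrite big_split /= big_ord_recl /= mulr0 add0r.
rewrite [X in _ + X = _]big_ord_recr /= subnn mulr0 addr0.
rewrite mulr_sumr -big_split /=; apply: eq_bigr => k _.
rewrite /bump /= add1n subSS.
have kn : (k <= n)%N by rewrite -ltnS.
rewrite subSn //.
rewrite [X in X + _]mulrAC Crec -[X in _ + X]mulrA Crec natrB //. ring.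
Qed.
Lemma psbinomE a c n : psbinom a c n = Cb a n * c ^+ n.
Proof. by []. Qed.

Lemma psmul_binom a b c : psmul (psbinom a c) (psbinom b c) = psbinom (a+b) c.
Proof.
apply: functional_extensionality => n; rewrite /psmul psbinomE -Cvand mulr_suml.
apply: eq_bigr => k _; rewrite !psbinomE.
have kn : (k <= n)%N by rewrite -ltnS.
have -> : c ^+ n = c ^+ k * c ^+ (n - k) by rewrite -exprD subnKC.
ring.
Qed.

Lemma binom0 c : psbinom 0 c = psone.
Proof.
apply: functional_extensionality => -[|n]; first by rewrite psbinomE Cb0 /psone mul1r.
by rewrite psbinomE /Cb big_ord_recl /= subrr !mul0r /psone.
Qed.

Lemma psmulC A B : psmul A B = psmul B A.
Proof.
apply: functional_extensionality => n; rewrite /psmul (reindex_inj rev_ord_inj) /=.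
apply: eq_bigr => k _; rewrite subSS mulrC; congr (_ * _); congr (B _).
by rewrite subKn // -ltnS.
Qed.

Lemma psmul1 A : psmul A psone = A.
Proof.
apply: functional_extensionality => n; rewrite /psmul big_ord_recr /= subnn /psone /= mulr1.
rewrite big1 ?add0r // => k _; rewrite subn_eq0 leqNgt ltn_ord /= mulr0 //.
Qed.

Lemma psmul_scalel a A B : psmul (fun n => a * A n) B = fun n => a * psmul A B n.
Proof.
apply: functional_extensionality => n; rewrite /psmul mulr_sumr.
by apply: eq_bigr => k _; rewrite mulrA.
Qed.

Lemma psmul_scaler a A B : psmul A (fun n => a * B n) = fun n => a * psmul A B n.
Proof. by rewrite psmulC psmul_scalel psmulC. Qed.

Definition shift (k : nat) (B : ps) : ps := fun n => if (k <= n)%N then B (n - k)%N else 0.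

Lemma psmul_shiftr k A B : psmul A (shift k B) = shift k (psmul A B).
Proof.
apply: functional_extensionality => n; rewrite /psmul /shift.
case: leqP => kn; last first.
  apply: big1 => i _; case: leqP => h; last by rewrite mulr0.
  have := ltn_ord i; lia.
rewrite -(big_mkord xpredT (fun i => A i * (if (k <= n - i)%N then B (n - i - k)%N else 0))).
rewrite -(big_mkord xpredT (fun i => A i * B (n - k - i)%N)).
rewrite (big_cat_nat _ (n := (n - k).+1)) //=; last by lia.
rewrite [X in _ + X]big1_seq ?addr0; last first.
  move=> i; rewrite mem_index_iota => /andP[h1 h2].
  case: leqP => h3; last by rewrite mulr0.
  lia.
apply: eq_big_seq => i; rewrite mem_index_iota => /andP[_ h].
case: leqP => h3; last lia.
congr (_ * B _); lia.
Qed.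

Lemma psmul_shiftl k A B : psmul (shift k A) B = shift k (psmul A B).
Proof. by rewrite psmulC psmul_shiftr psmulC. Qed.

Lemma shiftS j X : shift 1 (shift j X) = shift j.+1 X.
Proof.
apply: functional_extensionality => -[|n]; rewrite /shift //=.
by rewrite subn1 /= ltnS.
Qed.
Lemma psinv_eq a v : a 0%N != 0 -> psmul a v = psone -> psinv a = v.
Proof.
move=> a0 H.
have E : forall n, psinv_seq a n = mkseq v n.+1.
  elim=> [|n IH] /=.
    have := congr1 (fun f => f 0%N) H; rewrite /psmul /psone big_ord1 subn0 /= => h.
    congr [:: _]; apply: (mulfI a0); rewrite divff // h //.
  rewrite IH [in RHS]mkseqS; congr rcons.
  have := congr1 (fun f => f n.+1) H; rewrite /psmul /psone big_ord_recl /= subn0 => h.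
  rewrite big_add1 /= big_mkord.
  rewrite (eq_bigr (fun i : 'I_n.+1 => a (bump 0 i) * v (n.+1 - bump 0 i)%N)); last first.
    move=> i _; rewrite nth_mkseq /bump //=; have := ltn_ord i; lia.
  have h2 : \sum_(i < n.+1) a (bump 0 i) * v (n.+1 - bump 0 i)%N = - (a 0%N * v n.+1).
    by apply/eqP; rewrite -subr_eq0 opprK addrC h.
  rewrite h2; field; exact: a0.
move=> /=; apply: functional_extensionality => n.
by rewrite /psinv E nth_mkseq.
Qed.
Lemma Cb_neg a e : Cb (- a + e%:R - 1) e = (-1) ^+ e * Cb a e.
Proof.
rewrite /Cb mulrA; congr (_ / _).
rewrite (reindex_inj rev_ord_inj) /=.
rewrite (eq_bigr (fun k : 'I_e => - (a - k%:R))); last first.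
  move=> k _; have ke := ltn_ord k.
  have -> : (e - k.+1)%N%:R = e%:R - (k + 1)%N%:R :> rat by rewrite natrB ?addn1.
  rewrite natrD; ring.
by rewrite prodrN card_ord.
Qed.
Lemma shift0 X : shift 0 X = X.
Proof. by apply: functional_extensionality => n; rewrite /shift subn0. Qed.

Section S.
Variable p : nat.
Let c : rat := - (p ^ 2)%:R.
Let B a := psbinom a c.

Lemma F1 : fser p = fun n => -1 * shift 1 (B (-1)) n.
Proof.
rewrite /fser.
have -> : (fun n : nat => - (n == 1%N)%:R : rat) = fun n => -1 * shift 1 psone n.
  apply: functional_extensionality => -[|[|n]] //=; rewrite /shift /psone /=; by rewrite ?mulr0 ?mulr1 ?oppr0.
by rewrite psmul_scalel psmul_shiftl psmulC psmul1.
Qed.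

Lemma F2 j : psexp (fser p) j = fun n => (-1) ^+ j * shift j (B (- j%:R)) n.
Proof.
elim: j => [|j IH].
  apply: functional_extensionality => n; rewrite /= shift0 oppr0 /B binom0 mul1r //.
rewrite /psexp iterS -/(psexp _ _) IH F1 psmul_scalel psmul_scaler psmul_shiftl psmul_shiftr shiftS.
rewrite /B psmul_binom; apply: functional_extensionality => n.
rewrite exprS mulrA; congr (_ * shift _ (psbinom _ _) _).
rewrite -[j.+1]addn1 natrD; ring.
Qed.

Lemma F3 : psinv (fun i => fser p i.+1) = fun n => -1 * B 1 n.
Proof.
apply: psinv_eq.
  by rewrite F1 /shift /= /B subnn psbinomE Cb0 expr0 !mulr1 oppr_eq0 oner_eq0.
have -> : psmul (fun i => fser p i.+1) (fun n => -1 * B 1 n) = psmul (fun n => -1 * B (-1) n) (fun n => -1 * B 1 n).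
  congr psmul; by apply: functional_extensionality => n; rewrite F1 /shift /= subn1.
rewrite psmul_scalel psmul_scaler /B psmul_binom addNr binom0.
apply: functional_extensionality => n; by rewrite mulrA mulrNN !mul1r.
Qed.

Lemma F4 m : psexp (fun n => -1 * B 1 n) m = fun n => (-1) ^+ m * B (m%:R) n.
Proof.
elim: m => [|m IH].
  apply: functional_extensionality => n; rewrite /= /B binom0 mul1r //.
rewrite /psexp iterS -/(psexp _ _) IH psmul_scalel psmul_scaler /B psmul_binom.
apply: functional_extensionality => n.
rewrite exprS mulrA; congr (_ * psbinom _ _ _).
rewrite -[m.+1]add1n natrD //.
Qed.
End S.
Lemma RHS p q i j : riordan (hser p q) (fser p) i j =
  if (j <= i)%N then (-1) ^+ j * psbinom (- ((p - q)%:R / p%:R) + - j%:R) (- (p ^ 2)%:R) (i - j)%N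
  else 0.
Proof.
rewrite /riordan F2 psmul_scaler psmul_shiftr /hser psmul_binom /shift.
by case: leqP => //; rewrite mulr0.
Qed.

Theorem theorem5 (p q : nat) (hp : (2 <= p)%N) (hq : (0 < q < p)%N) :
  forall i j : nat,
    dual_riordan (gser p q) (fser p) i j = riordan (hser p q) (fser p) i j.
Proof.
move=> i j; rewrite RHS /dual_riordan.
case: i => [|i].
  have -> : - (0%:Z) = Posz 0 by [].
  case: j => [|j].
    have -> : - (0%:Z) = Posz 0 by [].
    rewrite /= /riordan /= psmul1 /gser !psbinomE !Cb0 !expr0 !mulr1 //.
  have -> : - (j.+1%:Z) = Negz j by [].
  by [].
have -> : - (i.+1%:Z) = Negz i by [].
rewrite /recmat F3 F4 psmul_scaler /gser psmul_binom.
case: (leqP j i.+1) => hj; last first.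
  have [d hd] : exists d, (j - i.+1)%N = d.+1 by exists (j - i.+2)%N; lia.
  have -> : - (j%:Z) + (i.+1)%:Z = Negz d.
    have -> : Negz d = - (d.+1%:Z) by [].
    lia.
  by [].
have -> : - (j%:Z) + (i.+1)%:Z = Posz (i.+1 - j)%N by lia.
set e := (i.+1 - j)%N.
have ie : i.+1 = (j + e)%N by rewrite /e; lia.
have p0 : p%:R != 0 :> rat by rewrite pnatr_eq0 -lt0n; lia.
have qp : (q <= p)%N by lia.
have -> : - ((p - q)%:R / p%:R) + - j%:R = - (- (q%:R / p%:R) + i.+1%:R) + e%:R - 1 :> rat.
  rewrite natrB // ie natrD; field; exact: p0.
rewrite !psbinomE Cb_neg ie exprD; ring.
Qed.
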